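(* Let $G$ be a connected triangle-free graph with no full star-cutset. Then $G$ has no cut-vertex of degree at least three. Moreover, if $G$ is not a path with at most $4$ vertices, then $G$ has minimum degree at least $2$.
   Context: A full star-cutset of a connected graph $G$ is a set $N[u]=\{u\}\cup N(u)$ whose removal disconnects $G$. *)

(* Defs.v *)
(* A finite simple graph is a symmetric irreflexive
   relation e on a finType T (vertex set = T). *)
From mathcomp Require Import all_boot.
Set Implicit Arguments. Unset Strict Implicit. Unset Printing Implicit Defensive.

Section Graphs.
Variables (T : finType) (e : rel T).

Definition induced_rel (S : {set T}) : rel T :=
  [rel x y | [&& e x y, x \in S & y \in S]].

Definition connected_on (S : {set T}) : Prop :=
  S != set0 /\ forall x y, x \in S -> y \in S -> connect (induced_rel S) x y.

Definition connected_graph : Prop := connected_on [set: T].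

(* removal of X disconnects G: two remaining vertices are not joined by a
   path in G - X (so G - X is nonempty and not connected) *)
Definition disconnects (X : {set T}) : Prop :=
  exists x y, [/\ x \notin X, y \notin X & ~~ connect (induced_rel (~: X)) x y].

Definition closed_nbhd (u : T) : {set T} := u |: [set v | e u v].

Definition full_star_cutset (X : {set T}) : Prop :=
  exists u, X = closed_nbhd u /\ disconnects X.

Definition has_full_star_cutset : Prop := exists X, full_star_cutset X.

Definition triangle_free : Prop := forall x y z, ~ [&& e x y, e y z & e x z].

Definition deg (v : T) : nat := #|[set w | e v w]|.

Definition cut_vertex (v : T) : Prop := disconnects [set v].

Definition is_path_graph (n : nat) : Prop :=
  exists f : 'I_n -> T, bijective f /\
    forall i j : 'I_n, e (f i) (f j) = ((i.+1 == j :> nat) || (j.+1 == i :> nat)).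

End Graphs.

(* Main.v *)
Require Import Defs.
From mathcomp Require Import all_boot.
Set Implicit Arguments. Unset Strict Implicit. Unset Printing Implicit Defensive.

Section Aux.
Variables (T : finType) (e : rel T).
Hypotheses (e_sym : symmetric e) (e_irr : irreflexive e).

Lemma closed_reach (A : pred T) S x y :
  (forall a b, a \in A -> induced_rel e S a b -> b \in A) ->
  x \in A -> connect (induced_rel e S) x y -> y \in A.
Proof.
move=> H xA /connectP [p]; elim: p x xA => [|z p IH] x xA /=; first by move=> _ ->.
by case/andP => exz pz yl; apply: IH (H _ _ xA exz) pz yl.
Qed.

Lemma inducedE S x y : induced_rel e S x y = [&& e x y, x \in S & y \in S].
Proof. by []. Qed.

Lemma induced_sym S : symmetric (induced_rel e S).
Proof. by move=> x y; rewrite /induced_rel /= e_sym; case: (x \in S); case: (y \in S); rewrite ?andbF ?andbT. Qed.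

Lemma connect_mono (S S' : {set T}) x y : S \subset S' ->
  connect (induced_rel e S) x y -> connect (induced_rel e S') x y.
Proof.
move=> sub; apply: connect_sub => a b /= /and3P [eab aS bS].
by apply: connect1; rewrite inducedE eab !(subsetP sub).
Qed.

Lemma path_graph_of (s : seq T) (x0 : T) :
  uniq s -> (forall x, x \in s) ->
  (forall i j, i < size s -> j < size s ->
     e (nth x0 s i) (nth x0 s j) = (i.+1 == j) || (j.+1 == i)) ->
  is_path_graph e (size s).
Proof.
move=> us alls H.
exists (fun i : 'I_(size s) => nth x0 s i); split; last by move=> i j; apply: H.
apply: inj_card_bij.
  by move=> i j /eqP; rewrite nth_uniq // => /eqP; apply: val_inj.
rewrite card_ord; apply: leq_trans (card_size s).
by apply: subset_leq_card; apply/subsetP => x _; apply: alls.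
Qed.

End Aux.

Theorem mainTheorem17 (T : finType) (e : rel T)
  (e_sym : symmetric e) (e_irr : irreflexive e)
  (Gconn : connected_graph e) (Gtf : triangle_free e)
  (Gnfsc : ~ has_full_star_cutset e) :
  (forall v : T, cut_vertex e v -> deg e v < 3) /\
  ((~ exists n, n <= 4 /\ is_path_graph e n) -> forall v : T, 2 <= deg e v).
Proof.
have nbr x y : e x y -> x != y.
  by move=> exy; apply/eqP => E; move: exy; rewrite E e_irr.
have inN a x : (x \in closed_nbhd e a) = (x == a) || e a x.
  by rewrite /closed_nbhd !inE.
have K a x y : x \notin closed_nbhd e a -> y \notin closed_nbhd e a ->
    ~~ connect (induced_rel e (~: closed_nbhd e a)) x y -> False.
  move=> xN yN nc; apply: Gnfsc; exists (closed_nbhd e a), a; split => //.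
  by exists x, y.
split.
  move=> v [x0 [y0 [x0v y0v nxy]]]; rewrite ltnNge; apply/negP.
  move/card_gt2P => [a [b [c [[aN bN cN] [ab bc ca]]]]].
  move: aN bN cN; rewrite !inE => eva evb evc.
  set R := connect (induced_rel e (~: [set v])).
  have Rsym : symmetric R by apply: sym_connect_sym; apply: induced_sym.
  have nv x : e v x -> x \in ~: [set v].
    by move=> /nbr; rewrite !inE eq_sym.
  have KK a' x y : e v a' -> x \notin closed_nbhd e a' ->
      y \notin closed_nbhd e a' -> ~~ R x y -> False.
    move=> eva' xN yN nR; apply: (K a' x y xN yN); apply: contra nR.
    apply: connect_mono; apply/subsetP => z; rewrite !in_setC inN !inE.
    by apply: contra => /eqP ->; rewrite e_sym eva' orbT.
  have pair a' b' : e v a' -> e v b' -> a' != b' -> R a' b' -> False.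
    move=> eva' evb' ab' Rab.
    have [y [yv nby]] : exists y, y \in ~: [set v] /\ ~~ R b' y.
      case Rx: (R b' x0); last by exists x0; rewrite in_setC x0v Rx.
      case Ry: (R b' y0); last by exists y0; rewrite in_setC y0v Ry.
      by exfalso; move/negP: nxy; apply; apply: (connect_trans (y:=b')) => //; rewrite -/R Rsym.
    apply: (KK a' b' y eva') => //.
      rewrite inN negb_or eq_sym ab' /=; apply/negP => eab.
      by apply: (Gtf a' v b'); rewrite e_sym eva' evb' eab.
    rewrite inN negb_or; apply/andP; split.
      by apply: contra nby => /eqP ->; rewrite Rsym.
    apply/negP => eay; move/negP: nby; apply.
    rewrite Rsym in Rab; apply: connect_trans Rab _; apply: connect1.
    by rewrite inducedE eay nv.
  case Rab: (R a b); first by apply: (pair a b).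
  case Rbc: (R b c); first by apply: (pair b c).
  case Rca: (R c a); first by apply: (pair c a).
  apply: (KK a b c eva); last by rewrite -/R Rbc.
    rewrite inN negb_or eq_sym ab /=; apply/negP => eab; move: Rab.
    by rewrite /R connect1 // inducedE eab !nv.
  rewrite inN negb_or ca /=; apply/negP => eac; move: Rca.
  by rewrite Rsym /R connect1 // inducedE eac !nv.
move=> notP v; rewrite leqNgt; apply/negP => dlt.
have conn x y : connect (induced_rel e [set: T]) x y.
  by case: Gconn => _; apply; rewrite inE.
have eT a b : induced_rel e [set: T] a b = e a b by rewrite inducedE !inE !andbT.
apply: notP.
move: dlt; rewrite ltnS leq_eqVlt ltnS leqn0 orbC.
case/orP => [/eqP/cards0_eq D | /cards1P [u D]].
  have allv x : x = v.
    apply/eqP; apply: (closed_reach (A := pred1 v)) (conn v x); last by rewrite inE.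
    move=> a b /eqP -> ; rewrite eT => evb.
    by have := in_set0 b; rewrite -D inE evb.
  exists (size [:: v]); split; first by []; apply: (@path_graph_of _ e [:: v] v) => //.
    by move=> x; rewrite (allv x) inE.
  by move=> [|i] [|j] //=; rewrite e_irr.
have ev w : e v w = (w == u).
  by have := f_equal (fun S : {set T} => w \in S) D; rewrite !inE.
have evu : e v u by rewrite ev.
have uv : u != v by rewrite eq_sym nbr.
case: (boolP [exists w, e u w && (w != v)]); last first.
  rewrite negb_exists => /forallP nw.
  have all2 x : x \in [:: v; u].
    apply: (closed_reach (A := mem [:: v; u])) (conn v x); last by rewrite inE eqxx.
    move=> a b; rewrite eT !inE => /orP [] /eqP -> .
      by rewrite ev => ->; rewrite orbT.
    by move=> eub; have := nw b; rewrite eub /= negbK => ->.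
  exists (size [:: v; u]); split; first by []; apply: (@path_graph_of _ e [:: v; u] v) => //.
    by rewrite /= inE eq_sym uv.
  move=> [|[|i]] [|[|j]] //=; by rewrite ?e_irr ?evu // e_sym evu.
case/existsP => w /andP [euw wv].
have wu : w != u by rewrite eq_sym nbr.
have evw : e v w = false by rewrite ev (negbTE wu).
have C1 x : x != v -> (x == w) || e w x.
  move=> xv; apply/negPn/negP => xN.
  apply: (K w v x); rewrite ?inN //.
    by rewrite negb_or eq_sym wv e_sym evw.
  apply/negP => /(closed_reach (A := pred1 v)) H; move/negP: xv; apply; apply: H => //.
  move=> a b /eqP ->; rewrite inducedE ev => /and3P [/eqP -> _].
  by rewrite in_setC inN e_sym euw orbT.
  by rewrite inE.
have C2 x : e u x -> (x == v) || (x == w).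
  move=> eux; case: (eqVneq x v) => //= xv.
  case/orP: (C1 x xv) => // ewx.
  by exfalso; apply: (Gtf u w x); rewrite euw ewx eux.
have euv : e u v by rewrite e_sym.
have ewu : e w u by rewrite e_sym.
case: (boolP [exists z, (z != v) && (z != u) && (z != w)]); last first.
  rewrite negb_exists => /forallP nz.
  have all3 x : x \in [:: v; u; w].
    by have := nz x; rewrite !inE -!negb_or negbK !orbA.
  exists (size [:: v; u; w]); split; first by []; apply: (@path_graph_of _ e [:: v; u; w] v) => //.
    by rewrite /= !inE !negb_or !(eq_sym v) (eq_sym u w) uv wv wu.
  have ewv : e w v = false by rewrite e_sym.
  move=> [|[|[|i]]] [|[|[|j]]] //=; by rewrite ?e_irr ?evu ?euv ?euw ?ewu ?evw ?ewv.
case/existsP => z /andP [/andP [zv zu] zw].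
have ewz : e w z by have := C1 z zv; rewrite (negbTE zw).
have euz : e u z = false.
  by apply/negP => /C2; rewrite (negbTE zv) (negbTE zw).
have evz : e v z = false by rewrite ev (negbTE zu).
have C3 y : e z y -> y = w.
  move=> ezy; apply/eqP; case: (eqVneq y w) => // yw.
  have yv : y != v by apply: contraTneq ezy => ->; rewrite e_sym evz.
  case/orP: (C1 y yv); first by rewrite (negbTE yw).
  by move=> ewy; exfalso; apply: (Gtf w z y); rewrite ewz ezy ewy.
have all4 x : x \in [:: v; u; w; z].
  rewrite !inE; apply/negPn/negP; rewrite !negb_or => /and4P [xv xu xw xz].
  apply: (K z v x).
  - rewrite inN negb_or eq_sym zv /=; by rewrite e_sym evz.
  - rewrite inN negb_or xz /=; apply/negP => /C3 /eqP; by rewrite (negbTE xw).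
  apply/negP => /(closed_reach (A := mem [:: v; u])) H.
  suff: x \in [:: v; u] by rewrite !inE (negbTE xv) (negbTE xu).
  apply: H; last by rewrite inE eqxx.
  move=> a b aA; rewrite inducedE !in_setC !inN !negb_or => /and3P [eab _ /andP [bz ezb]].
  move: aA; rewrite !inE => /orP [] /eqP E; subst a.
    by move: eab; rewrite ev => /eqP ->; rewrite ?inE eqxx orbT.
  case/orP: (C2 b eab) => /eqP E; first by rewrite E ?inE eqxx.
  by move: ezb; rewrite E (e_sym z w) ewz.
exists (size [:: v; u; w; z]); split; first by []; apply: (@path_graph_of _ e [:: v; u; w; z] v) => //.
  by rewrite /= !inE !negb_or !(eq_sym v) (eq_sym u w) (eq_sym u z) (eq_sym w z) uv wv wu zv zu zw.
have ewv : e w v = false by rewrite e_sym.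
have ezv : e z v = false by rewrite e_sym.
have ezu : e z u = false by rewrite e_sym.
have ezw : e z w by rewrite e_sym.
move=> [|[|[|[|i]]]] [|[|[|[|j]]]] //=;
  by rewrite ?e_irr ?evu ?euv ?euw ?ewu ?evw ?ewv ?evz ?ezv ?euz ?ezu ?ewz ?ezw.
Qed.
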